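(* Let $r\in\mathbb{N}$ and let $0\le a_0<a_1<\dots<a_r\le 1$ be distinct interpolation nodes which are symmetrically distributed, i.e. $a_j=1-a_{r-j}$ for $j=0,\dots,r$. Let $\mathcal{L}\in\mathbb{R}$. For every real $\tau\neq 0$ let $\tilde p_r(\cdot,\tau)$ be the interpolation polynomial defined below. Then for every $s$ and every $\tau\neq 0$, $$\tilde p_r(s-\tau,-\tau)=\sum_{j=0}^r e^{-i a_j\tau\mathcal{L}}\,p_{j,r}(s-\tau,-\tau)=e^{-i\tau\mathcal{L}}\,\tilde p_r(s,\tau).$$
   Context: For real $\tau\neq 0$, let $p_{j,r}(\cdot,\tau)$, $j=0,\dots,r$, be the Lagrange basis polynomials (polynomials in the first variable of degree at most $r$) associated with the distinct points $a_0\tau,\dots,a_r\tau$, i.e. $p_{j,r}(a_m\tau,\tau)=\delta_{j,m}$. Define $\tilde p_r(s,\tau)=\sum_{j=0}^r e^{i a_j\tau\mathcal{L}}\,p_{j,r}(s,\tau)$, the unique polynomial in $s$ of degree at most $r$ with $\tilde p_r(a_j\tau,\tau)=e^{i a_j\tau\mathcal{L}}$ for $j=0,\dots,r$. (In the paper $\mathcal{L}$ is the lower-order part $\mathcal{L}_{\mathrm{low}}$ of a frequency polynomial, a real number for fixed frequencies.) *)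

(* Defs.v *)
From HB Require Import structures.
From mathcomp Require Import all_boot all_order all_algebra.
From mathcomp Require Import complex.
From mathcomp Require Import reals trigo.
Set Implicit Arguments. Unset Strict Implicit. Unset Printing Implicit Defensive.
Import Order.TTheory GRing.Theory Num.Theory.
Local Open Scope ring_scope.
Local Open Scope complex_scope.

Definition expi (R : realType) (t : R) : R[i] := (cos t) +i* (sin t).

(* Lagrange basis polynomial p_{j,r}(., tau) for the nodes a_0 tau, ..., a_r tau,
   as a polynomial in the first variable. *)
Definition lagr_poly (R : realType) (r : nat) (a : nat -> R) (j : nat) (tau : R)
  : {poly R} :=
  \prod_(m < r.+1 | (m : nat) != j)
     (('X - (a m * tau)%:P) * ((a j * tau - a m * tau)^-1)%:P).

Definition lagr (R : realType) (r : nat) (a : nat -> R) (j : nat) (s tau : R) : R :=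
  (lagr_poly r a j tau).[s].

Definition ptilde (R : realType) (r : nat) (a : nat -> R) (L s tau : R) : R[i] :=
  \sum_(j < r.+1) expi (a j * tau * L) * (lagr r a j s tau)%:C.

(* Main.v *)
Require Import Defs.
From HB Require Import structures.
From mathcomp Require Import all_boot all_order all_algebra.
From mathcomp Require Import complex.
From mathcomp Require Import reals trigo.
From mathcomp Require Import ring lra zify.
Import Order.TTheory GRing.Theory Num.Theory.
Local Open Scope ring_scope.
Local Open Scope complex_scope.

Lemma expiD (R : realType) (x y : R) : expi (x + y) = expi x * expi y.
Proof.
rewrite /expi cosD sinD; apply/eqP; rewrite eq_complex /=; apply/andP; split;
  apply/eqP; ring.
Qed.

Lemma lagr_sym (R : realType) (r : nat) (a : nat -> R)
  (hsym : forall j : nat, (j <= r)%N -> a j = 1 - a (r - j)%N)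
  (s tau : R) (j : nat) (hj : (j <= r)%N) :
  lagr r a j (s - tau) (- tau) = lagr r a (r - j)%N s tau.
Proof.
rewrite /lagr /lagr_poly !horner_prod.
rewrite [RHS](reindex_inj rev_ord_inj) /=.
apply: eq_big => [m|m _].
  have := ltn_ord m; rewrite /= => hm.
  apply/idP/idP => /eqP H; apply/eqP => H'; apply: H; lia.
rewrite /= !hornerE.
have hm : (m <= r)%N by rewrite -ltnS ltn_ord.
rewrite (hsym m hm) (hsym j hj).
congr (_ * _^-1); ring.
Qed.

Theorem lemma4p2 (R : realType) (r : nat) (a : nat -> R)
  (ha0 : 0 <= a 0%N) (har : a r <= 1)
  (hinc : forall j : nat, (j < r)%N -> a j < a j.+1)
  (hsym : forall j : nat, (j <= r)%N -> a j = 1 - a (r - j)%N)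
  (L s tau : R) (htau : tau != 0) :
  ptilde r a L (s - tau) (- tau)
    = \sum_(j < r.+1) expi (- (a j * tau * L)) * (lagr r a j (s - tau) (- tau))%:C
  /\ ptilde r a L (s - tau) (- tau) = expi (- (tau * L)) * ptilde r a L s tau.
Proof.
split.
  rewrite /ptilde; apply: eq_bigr => j _; congr (expi _ * _); ring.
rewrite /ptilde.
transitivity (\sum_(j < r.+1) expi (a j * - tau * L) * (lagr r a (r - j)%N s tau)%:C).
  apply: eq_bigr => j _; rewrite lagr_sym //.
  by rewrite -ltnS ltn_ord.
rewrite (reindex_inj rev_ord_inj) /= mulr_sumr.
apply: eq_bigr => k _.
have hk : (k <= r)%N by rewrite -ltnS ltn_ord.
rewrite subSS subKn // mulrA -expiD.
have -> : a (r - k)%N = 1 - a k.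
  rewrite [in RHS](hsym k hk); ring.
have -> : (1 - a k) * - tau * L = - (tau * L) + a k * tau * L by ring.
by [].
Qed.
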